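(* Let $A\in\mathbb{C}^{m\times n}$ and $X\in\mathbb{C}^{n\times m}$. Then the following are equivalent: (1) $X\in A\{1,3^{\mathfrak{m}}\}$; (2) $A^{\sim}AX=A^{\sim}$; (3) $AX=P_{\mathcal{R}(A),\mathcal{N}(A^{\sim})}$. In this case, $$A\{1,3^{\mathfrak{m}}\}=\left\{A^{(1,3^{\mathfrak{m}})}+(I_n-A^{(1,3^{\mathfrak{m}})}A)Y : Y\in\mathbb{C}^{n\times m}\right\},$$ where $A^{(1,3^{\mathfrak{m}})}\in A\{1,3^{\mathfrak{m}}\}$ is fixed but arbitrary.
   Context: For a positive integer $k$, the Minkowski metric matrix of order $k$ is $G_k=\mathrm{diag}(1,-I_{k-1})$ (with $G_1=(1)$). For $A\in\mathbb{C}^{m\times n}$, the Minkowski adjoint is $A^{\sim}=G_nA^*G_m$, where $A^*$ is the conjugate transpose. For $A\in\mathbb{C}^{m\times n}$ and $X\in\mathbb{C}^{n\times m}$ consider the equations $(1)\ AXA=A$, $(2)\ XAX=X$, $(3^{\mathfrak{m}})\ (AX)^{\sim}=AX$, $(4^{\mathfrak{m}})\ (XA)^{\sim}=XA$; $A\{i,\dots,k\}$ denotes the set of all $X$ satisfying the listed equations. $\mathcal{R}(\cdot)$ and $\mathcal{N}(\cdot)$ denote range and null space. For subspaces $\mathcal{S},\mathcal{T}\subseteq\mathbb{C}^m$ with $\mathcal{S}\oplus\mathcal{T}=\mathbb{C}^m$, $P_{\mathcal{S},\mathcal{T}}$ denotes the projector onto $\mathcal{S}$ along $\mathcal{T}$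 (statement (3) includes that this direct sum holds). *)

(* Defs.v *)
From HB Require Import structures.
From mathcomp Require Import all_boot all_order all_algebra.
From mathcomp Require Import reals complex.
Set Implicit Arguments. Unset Strict Implicit. Unset Printing Implicit Defensive.
Import Order.TTheory GRing.Theory Num.Theory.
Local Open Scope ring_scope.

Definition minkG (C : ringType) (k : nat) : 'M[C]_k :=
  \matrix_(i < k, j < k)
    (if i == j then (if (i : nat) == 0%N then 1 else -1) else 0).

Definition ctr (C : numClosedFieldType) (m n : nat) (A : 'M[C]_(m, n))
  : 'M[C]_(n, m) := (map_mx Num.conj A)^T.

Definition madj (C : numClosedFieldType) (m n : nat) (A : 'M[C]_(m, n))
  : 'M[C]_(n, m) := minkG C n *m ctr A *m minkG C m.

Definition mink13 (C : numClosedFieldType) (m n : nat)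
  (A : 'M[C]_(m, n)) (X : 'M[C]_(n, m)) : Prop :=
  A *m X *m A = A /\ madj (A *m X) = A *m X.

Definition mrange (C : ringType) (m n : nat) (A : 'M[C]_(m, n)) (v : 'cV[C]_m) : Prop :=
  exists u : 'cV[C]_n, v = A *m u.
Definition mnull (C : ringType) (m n : nat) (B : 'M[C]_(m, n)) (v : 'cV[C]_n) : Prop :=
  B *m v = 0.

Definition full_direct_sum (C : ringType) (m : nat) (S T : 'cV[C]_m -> Prop) : Prop :=
  (forall x : 'cV[C]_m, exists s t, S s /\ T t /\ x = s + t) /\
  (forall v : 'cV[C]_m, S v -> T v -> v = 0).

Definition is_proj_onto_along (C : ringType) (m : nat) (S T : 'cV[C]_m -> Prop)
  (P : 'M[C]_m) : Prop :=
  full_direct_sum S T /\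
  (forall s t : 'cV[C]_m, S s -> T t -> P *m (s + t) = s).

(* Main.v *)
Require Import Defs.
From HB Require Import structures.
From mathcomp Require Import all_boot all_order all_algebra.
From mathcomp Require Import reals complex.
Import Order.TTheory GRing.Theory Num.Theory.
Local Open Scope ring_scope.
Local Open Scope complex_scope.

Section Aux.
Variable C : numClosedFieldType.

Lemma minkG2 k : minkG C k *m minkG C k = 1%:M.
Proof.
apply/matrixP => i j; rewrite !mxE (bigD1 i) //= big1.
  rewrite !mxE eqxx addr0; have [->|ne] := eqVneq i j; last by rewrite mulr0.
  by case: ifP; rewrite ?mulr1 ?mulrNN ?mulr1.
by move=> l /negbTE nl; rewrite !mxE eq_sym nl mul0r.
Qed.

Lemma ctrG k : ctr (minkG C k) = minkG C k.
Proof.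
apply/matrixP => i j; rewrite /ctr !mxE eq_sym.
case: eqVneq => [->|]; last by rewrite rmorph0.
by case: ifP; rewrite ?rmorphN rmorph1.
Qed.

Lemma ctrM p q r (A : 'M[C]_(p, q)) (B : 'M[C]_(q, r)) :
  ctr (A *m B) = ctr B *m ctr A.
Proof. by rewrite /ctr map_mxM trmx_mul. Qed.

Lemma ctrK p q (A : 'M[C]_(p, q)) : ctr (ctr A) = A.
Proof.
by apply/matrixP => i j; rewrite /ctr !mxE conjCK.
Qed.

Lemma madjM p q r (A : 'M[C]_(p, q)) (B : 'M[C]_(q, r)) :
  madj (A *m B) = madj B *m madj A.
Proof.
rewrite /madj ctrM !mulmxA -[_ *m minkG C q *m minkG C q]mulmxA minkG2 mulmx1.
by [].
Qed.

Lemma madjK p q (A : 'M[C]_(p, q)) : madj (madj A) = A.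
Proof.
rewrite /madj !ctrM ctrK !ctrG !mulmxA minkG2 mul1mx -mulmxA minkG2 mulmx1.
by [].
Qed.

Lemma mx_ext p q (M N : 'M[C]_(p, q)) :
  (forall v : 'cV[C]_q, M *m v = N *m v) -> M = N.
Proof.
move=> H; apply/matrixP => i j.
have := congr1 (fun W : 'cV[C]_p => W i ord0) (H (delta_mx j ord0)).
by rewrite -!colE !mxE.
Qed.

End Aux.


Section Gen.
Variable C : numClosedFieldType.
Variable adj0 : forall p q, 'M[C]_(p, q) -> 'M[C]_(q, p).
Local Notation adj := (adj0 _ _).
Hypothesis adjM : forall p q r (A : 'M[C]_(p, q)) (B : 'M[C]_(q, r)),
  adj (A *m B) = adj B *m adj A.
Hypothesis adjK : forall p q (A : 'M[C]_(p, q)), adj (adj A) = A.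
Variables (m n : nat) (A : 'M[C]_(m, n)).

Definition m13 (X : 'M[C]_(n, m)) := A *m X *m A = A /\ adj (A *m X) = A *m X.

Lemma gen12 X : adj A *m A *m X = adj A -> m13 X.
Proof.
move=> H.
have H1 : adj X *m adj A *m A = A.
  by have := congr1 (adj0 _ _) H; rewrite adjM adjM adjK mulmxA.
have H2 : adj (A *m X) = A *m X.
  by rewrite adjM -[in RHS]H1 -!mulmxA (mulmxA (adj A) A X) H.
split=> //; by rewrite -{1}H2 adjM.
Qed.

Lemma gen21 X : m13 X -> adj A *m A *m X = adj A.
Proof. case=> H1 H2; by rewrite -mulmxA -{1}H2 -adjM H1. Qed.

Lemma gen23 X : adj A *m A *m X = adj A ->
  is_proj_onto_along (mrange A) (mnull (adj A)) (A *m X).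
Proof.
move=> H; have [H1 H2] := @gen12 X H.
split; first split.
- move=> x; exists (A *m X *m x), (x - A *m X *m x); split.
    by exists (X *m x); rewrite mulmxA.
  split; last by rewrite addrC subrK.
  by rewrite /mnull mulmxBr !mulmxA H subrr.
- move=> v [u ->] Hn.
  have -> : A *m u = A *m X *m (A *m u) by rewrite mulmxA H1.
  by rewrite -H2 adjM -mulmxA Hn mulmx0.
- move=> s t [u ->] Ht; rewrite mulmxDr.
  have -> : A *m X *m t = 0 by rewrite -H2 adjM -mulmxA Ht mulmx0.
  by rewrite addr0 mulmxA H1.
Qed.

Lemma gen32 X : is_proj_onto_along (mrange A) (mnull (adj A)) (A *m X) ->
  adj A *m A *m X = adj A.
Proof.
move=> [[Hdec Hint] Hp].
apply: mx_ext => x; have [s [t [Hs [Ht ->]]]] := Hdec x.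
rewrite -(mulmxA (adj A *m A)) -(mulmxA (adj A)) (mulmxA A X) Hp //.
by rewrite mulmxDr Ht addr0.
Qed.

Lemma gen_sol A1 Z : m13 A1 ->
  m13 Z <-> exists Y : 'M[C]_(n, m), Z = A1 + (1%:M - A1 *m A) *m Y.
Proof.
move=> [HA1 HA2]; split.
  move=> [HZ1 HZ2].
  have E : A *m Z = A *m A1.
    by rewrite -[LHS]HZ2 -{1}HA1 -mulmxA adjM HZ2 HA2 mulmxA HZ1.
  exists (Z - A1); rewrite mulmxBr mulmxBl mul1mx mulmxBl mul1mx -!mulmxA E.
  set W := A1 *m (A *m A1).
  by rewrite opprB -addrA (addrA (- W)) addNr add0r addrCA subrr addr0.
move=> [Y ->].
have E : A *m (A1 + (1%:M - A1 *m A) *m Y) = A *m A1.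
  by rewrite mulmxDr mulmxA mulmxBr mulmx1 mulmxA HA1 subrr mul0mx addr0.
by split; rewrite E.
Qed.

End Gen.

Theorem theorem4p3 (R : realType) (m n : nat) (hm : (0 < m)%N) (hn : (0 < n)%N)
    (A : 'M[R[i]]_(m, n)) (X : 'M[R[i]]_(n, m)) :
  (mink13 A X <-> madj A *m A *m X = madj A) /\
  (madj A *m A *m X = madj A <->
     is_proj_onto_along (mrange A) (mnull (madj A)) (A *m X)) /\
  (forall A1 : 'M[R[i]]_(n, m), mink13 A A1 ->
     forall Z : 'M[R[i]]_(n, m),
       mink13 A Z <-> exists Y : 'M[R[i]]_(n, m), Z = A1 + (1%:M - A1 *m A) *m Y).
Proof.
have M := @madjM (R[i]); have K := @madjK (R[i]).
split.
  split.
    exact (@gen21 (R[i]) (@madj (R[i])) M m n A X).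
  exact (@gen12 (R[i]) (@madj (R[i])) M K m n A X).
split.
  split.
    exact (@gen23 (R[i]) (@madj (R[i])) M K m n A X).
  exact (@gen32 (R[i]) (@madj (R[i])) m n A X).
move=> A1 HA1 Z.
exact (@gen_sol (R[i]) (@madj (R[i])) M m n A A1 Z HA1).
Qed.
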